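(* Fix a phylogenetic model of $k$-state character change on leaf-labelled trees (for instance any of the CFN, JC, K2P or K3P models). Let $T_1,T_2,T_3,T_4$ be $n$-taxon trees on the taxon set $[n]$, not necessarily distinct, and let $K\subseteq[n]$. If $V_{T_1|_K}\ast V_{T_2|_K}\not\subseteq V_{T_3|_K}\ast V_{T_4|_K}$, then $V_{T_1}\ast V_{T_2}\not\subseteq V_{T_3}\ast V_{T_4}$.
   Context: Taxa are labelled by $[n]=\{1,\dots,n\}$. For each leaf-labelled tree $T$ the model has a polynomial parameterization map $\psi_T$ sending continuous (stochastic) parameters to the joint distribution of states at the leaves, a vector in $\mathbb{C}^{k^n}$; extending $\psi_T$ to complex parameters, $V_T\subseteq\mathbb{P}^{k^n-1}$ denotes the Zariski closure of its image. For $K\subseteq[n]$, $T|_K$ is the induced subtree of $T$ with leaf set $K$; marginalization of a distribution onto the leaves in $K$ is a linear map $\mathbb{C}^{k^n}\to\mathbb{C}^{k^{|K|}}$ which, for the models considered, sends $V_T$ to $V_{T|_K}$. For varieties $V,W$ in projective space, the join $V\ast W$ is the Zariski closure of the union of all lines meeting both $V$ and $W$ (equivalently the closure of the set of all mixtures $\pi p+(1-\pi)p'$ with $p\in V$, $p'\in W$); when $V=W$ it is the secant variety. *)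

(* Defs.v *)
From HB Require Import structures.
From mathcomp Require Import all_boot all_order all_algebra.
From mathcomp Require Import mpoly.
Set Implicit Arguments. Unset Strict Implicit. Unset Printing Implicit Defensive.
Import GRing.Theory.
Local Open Scope ring_scope.

Definition aset (F : fieldType) (I : finType) := (I -> F) -> Prop.

Definition aset_sub (F : fieldType) (I : finType) (A B : aset F I) : Prop :=
  forall x, A x -> B x.

Definition zcl (F : fieldType) (I : finType) (S : aset F I) : aset F I :=
  fun x => forall p : {mpoly F[#|I|]},
    (forall y, S y -> p.@[fun j => y (enum_val j)] = 0) ->
    p.@[fun j => x (enum_val j)] = 0.

(* Join of (affine cones over) projective varieties: Zariski closure of the
   set of sums x + y, x in V, y in W (the affine cone over V * W). *)
Definition join (F : fieldType) (I : finType) (V W : aset F I) : aset F I :=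
  zcl (fun z => exists x y, [/\ V x, W y & z = fun i => x i + y i]).

(* Leaves in K ⊆ [n] and joint leaf states (coordinates for leaf set K). *)
Definition leaves n (K : {set 'I_n}) := {i : 'I_n | i \in K}.
Definition coord k n (K : {set 'I_n}) := {ffun leaves K -> 'I_k}.

Definition marg (F : fieldType) k n (K : {set 'I_n})
  (p : coord k [set: 'I_n] -> F) : coord k K -> F :=
  fun s => \sum_(t : coord k [set: 'I_n] |
                 [forall i : leaves K, t (exist _ (sval i) (in_setT (sval i))) == s i])
             p t.
Arguments marg {F k n} K p s.

(* A phylogenetic model of k-state character change on leaf-labelled trees
   with leaves labelled by subsets of [n] (abstracted: the model supplies the
   trees, their induced subtrees, and polynomial parameterizations). *)
Record phylo_model (F : fieldType) (k n : nat) := PhyloModel {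
  tree : {set 'I_n} -> Type;
  restrict : tree [set: 'I_n] -> forall K : {set 'I_n}, tree K;
  npar : forall K, tree K -> nat;
  psi : forall K (T : tree K), coord k K -> {mpoly F[npar T]};
}.

Definition param F k n (M : phylo_model F k n) K (T : tree M K)
  (th : 'I_(npar T) -> F) : coord k K -> F :=
  fun s => (psi T s).@[th].
Arguments param {F k n M K} T th s.

(* V_T : the affine cone over the Zariski closure of the image of psi_T. *)
Definition var F k n (M : phylo_model F k n) K (T : tree M K) : aset F (coord k K) :=
  zcl (fun x => exists (l : F) th, x = fun s => l * param T th s).
Arguments var {F k n M K} T _.

Definition marg_compatible F k n (M : phylo_model F k n) : Prop :=
  forall (T : tree M [set: 'I_n]) (K : {set 'I_n}),
    aset_sub (fun y => exists x, var T x /\ y = marg K x) (var (restrict T K)) /\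
    aset_sub (var (restrict T K)) (zcl (fun y => exists x, var T x /\ y = marg K x)).

(* Main.v *)
Require Import Defs.
From HB Require Import structures.
From mathcomp Require Import all_boot all_order all_algebra.
From mathcomp Require Import mpoly.
From Stdlib Require Import FunctionalExtensionality.
Set Implicit Arguments. Unset Strict Implicit. Unset Printing Implicit Defensive.
Import GRing.Theory.
Local Open Scope ring_scope.

Section Aux.
Variable F : fieldType.

Lemma zcl_ext (I : finType) (S : aset F I) : aset_sub S (zcl S).
Proof. by move=> x Sx p Hp; apply: Hp. Qed.

Lemma zcl_min (I : finType) (S S' : aset F I) :
  aset_sub S (zcl S') -> aset_sub (zcl S) (zcl S').
Proof.
move=> H x Hx p Hp; apply: Hx => y Sy; exact: (H y Sy p Hp).
Qed.

Definition img (I J : finType) (f : (I -> F) -> (J -> F)) (A : aset F I) : aset F J :=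
  fun y => exists x, A x /\ y = f x.

Lemma zcl_img (I J : finType) (f : (I -> F) -> (J -> F))
  (q : J -> {mpoly F[#|I|]})
  (Hq : forall x j, (q j).@[fun i => x (enum_val i)] = f x j)
  (S : aset F I) : aset_sub (img f (zcl S)) (zcl (img f S)).
Proof.
move=> _ [x [Hx ->]] p Hp.
pose lq := [tuple q (enum_val j) | j < #|J|].
have E : forall z, (p \mPo lq).@[fun i => z (enum_val i)] = p.@[fun j => f z (enum_val j)].
  move=> z; rewrite comp_mpoly_meval; apply: meval_eq => j.
  by rewrite tnth_mktuple Hq.
rewrite -E; apply: Hx => y Sy; rewrite E; apply: Hp; by exists y.
Qed.

Lemma trans_poly (I : finType) (c : I -> F) :
  exists q : I -> {mpoly F[#|I|]},
  forall x j, (q j).@[fun i => x (enum_val i)] = x j + c j.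
Proof.
exists (fun j => 'X_(enum_rank j) + (c j)%:MP) => x j.
by rewrite mevalD mevalXU mevalC enum_rankK.
Qed.

Lemma zcl_add (I : finType) (A B D : aset F I) :
  (forall a b, A a -> B b -> zcl D (fun i => a i + b i)) ->
  forall x y, zcl A x -> zcl B y -> zcl D (fun i => x i + y i).
Proof.
move=> H x y Hx Hy.
have Step1 : forall x b, zcl A x -> B b -> zcl D (fun i => x i + b i).
  move=> x' b Hx' Hb.
  have [q Hq] := trans_poly b.
  have := @zcl_img I I (fun z i => z i + b i) q Hq A.
  move=> Himg.
  have : zcl (img (fun z i => z i + b i) A) (fun i => x' i + b i).
    by apply: Himg; exists x'.
  apply: zcl_min => _ [a [Ha ->]]; exact: H.
have [q Hq] := trans_poly x.
have Himg := @zcl_img I I (fun z i => z i + x i) q Hq B.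
have : zcl (img (fun z i => z i + x i) B) (fun i => y i + x i).
  by apply: Himg; exists y.
have -> : (fun i => x i + y i) = (fun i => y i + x i).
  by apply: functional_extensionality => i; rewrite addrC.
apply: zcl_min => _ [b [Hb ->]].
have -> : (fun i => b i + x i) = (fun i => x i + b i).
  by apply: functional_extensionality => i; rewrite addrC.
exact: Step1.
Qed.

Lemma marg_poly (k n : nat) (K : {set 'I_n}) :
  exists q : Defs.coord k K -> {mpoly F[#|{: Defs.coord k [set: 'I_n]}|]},
  forall (x : Defs.coord k [set: 'I_n] -> F) j,
    (q j).@[fun i => x (enum_val i)] = marg K x j.
Proof.
exists (fun s => \sum_(t : Defs.coord k [set: 'I_n] |
                 [forall i : leaves K, t (exist _ (sval i) (in_setT (sval i))) == s i])
             'X_(enum_rank t)) => x j.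
rewrite /marg raddf_sum /=; apply: eq_bigr => t _.
by rewrite mevalXU enum_rankK.
Qed.

Lemma margD (k n : nat) (K : {set 'I_n}) (x y : Defs.coord k [set: 'I_n] -> F) :
  marg K (fun i => x i + y i) = (fun s => marg K x s + marg K y s).
Proof.
by apply: functional_extensionality => s; rewrite /marg big_split.
Qed.

End Aux.

Theorem lemma1 (F : fieldType) (k n : nat) (M : phylo_model F k n)
  (HM : marg_compatible M)
  (T1 T2 T3 T4 : tree M [set: 'I_n]) (K : {set 'I_n}) :
  ~ aset_sub (join (var (restrict T1 K)) (var (restrict T2 K)))
             (join (var (restrict T3 K)) (var (restrict T4 K))) ->
  ~ aset_sub (join (var T1) (var T2)) (join (var T3) (var T4)).
Proof.
move=> Hn H; apply: Hn.
have [q Hq] := marg_poly F k K.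
have C : forall u w, var T1 u -> var T2 w ->
   join (var (restrict T3 K)) (var (restrict T4 K))
        (fun i => marg K u i + marg K w i).
  move=> u w Hu Hw.
  rewrite -margD.
  have Huw : join (var T3) (var T4) (fun i => u i + w i).
    by apply: H; apply: zcl_ext; exists u, w.
  have := @zcl_img F _ _ (marg K) q Hq _ _ (ex_intro _ (fun i : Defs.coord k [set: 'I_n] => u i + w i) (conj Huw erefl)).
  apply: zcl_min => _ [z [[u3 [u4 [H3 H4 ->]]] ->]].
  apply: zcl_ext; exists (marg K u3), (marg K u4); split.
  - by apply: (proj1 (HM T3 K)); exists u3.
  - by apply: (proj1 (HM T4 K)); exists u4.
  - by rewrite margD.
apply: zcl_min => _ [x [y [Hx Hy ->]]].
apply: (@zcl_add F _ (fun y => exists x, var T1 x /\ y = marg K x)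
                     (fun y => exists x, var T2 x /\ y = marg K x)).
- by move=> a b [u [Hu ->]] [w [Hw ->]]; exact: C.
- exact: (proj2 (HM T1 K)).
- exact: (proj2 (HM T2 K)).
Qed.
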